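(* Let $s$ be a positive integer, $S$ a linear subspace of $\mathbb{R}^s$, $b\in\mathbb{R}^s_{>0}$, and $z\in S+b$ with $z\in\mathbb{R}^s_{\ge0}$. Let $\alpha\in\{0,1\}^s$ be given by $\alpha_i=1$ if $z_i>0$ and $\alpha_i=0$ otherwise. Then $(\alpha+S)\cap\mathbb{R}^s_{\ge0}$ intersects $\mathbb{R}^s_{>0}$. *)

(* Defs.v *)
From HB Require Import structures.
From mathcomp Require Import all_boot all_order all_algebra.
From mathcomp Require Import reals.
Set Implicit Arguments. Unset Strict Implicit. Unset Printing Implicit Defensive.
Import Order.TTheory GRing.Theory Num.Theory.
Local Open Scope ring_scope.

Definition supp_ind (R : realType) (s : nat) (z : 'rV[R]_s) : 'rV[R]_s :=
  \row_i (if 0 < z 0 i then 1 else 0).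

(* Main.v *)
Require Import Defs.
From HB Require Import structures.
From mathcomp Require Import all_boot all_order all_algebra.
From mathcomp Require Import reals.
From mathcomp Require Import lra.
Import Order.TTheory GRing.Theory Num.Theory.
Local Open Scope ring_scope.

Theorem lemma4p5 (R : realType) (s : nat) (hs : (0 < s)%N)
  (S : {vspace 'rV[R]_s}) (b z : 'rV[R]_s)
  (hb : forall i, 0 < b 0 i)
  (hzS : z - b \in S)
  (hz0 : forall i, 0 <= z 0 i) :
  exists y : 'rV[R]_s,
    [/\ y - supp_ind z \in S, (forall i, 0 <= y 0 i) & (forall i, 0 < y 0 i)].
Proof.
set M := \sum_j z 0 j.
have M0 : 0 <= M by apply: sumr_ge0 => j _.
have zM : forall i, z 0 i <= M.
  move=> i; rewrite /M (bigD1 i) //= lerDl; exact: sumr_ge0.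
set t := (1 + M)^-1.
have t0 : 0 < t by rewrite invr_gt0; lra.
have tz : forall i, t * z 0 i < 1.
  move=> i; rewrite /t mulrC ltr_pdivrMr; last lra.
  have := zM i; lra.
have pos : forall i, 0 < (supp_ind z + t *: (b - z)) 0 i.
  move=> i; rewrite !mxE.
  have := tz i; have := hb i; have := hz0 i.
  case: ifP => hzi hz hbi htz.
    have : 0 < t * b 0 i by apply: mulr_gt0.
    rewrite mulrDr mulrN; lra.
  have : z 0 i = 0 by apply/eqP; rewrite eq_le hz andbT leNgt hzi.
  move=> ->; rewrite subr0 add0r; exact: mulr_gt0.
exists (supp_ind z + t *: (b - z)); split.
- rewrite addrC addKr.
  have -> : t *: (b - z) = (- t) *: (z - b) by rewrite scaleNr -scalerN opprB.
  exact: memvZ.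
- by move=> i; apply: ltW.
- exact: pos.
Qed.
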